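(* Let $0\le\gamma<1$ and let $f\in\mathcal{B}(\Omega_\gamma)$ have the expansion $f(z)=\sum_{n=0}^\infty a_n\left(z+\frac{\gamma}{1-\gamma}\right)^n$ in $\Omega_\gamma$. Define $$\mathcal{C}_f(\rho)=\sum_{n=0}^\infty \frac{1}{n+1}\left(\sum_{k=0}^n\frac{|a_k|}{(1-\gamma)^k}\right)\rho^n,\qquad \rho\in[0,1).$$ Then $$\mathcal{C}_f(\rho)\le \frac{1}{\rho}\log\frac{1}{1-\rho}\qquad\text{for all }\rho\in(0,\rho_0],$$ where $\rho_0\approx 0.533589$ is the unique root in $(0,1)$ of the equation $3(1-\rho)\log(1-\rho)+2\rho=0$. The number $\rho_0$ is best possible: for every $\gamma\in[0,1)$ and every $\rho\in(\rho_0,1)$ there exists $f\in\mathcal{B}(\Omega_\gamma)$ with $\mathcal{C}_f(\rho)>\frac{1}{\rho}\log\frac{1}{1-\rho}$.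
   Context: For $\gamma\in[0,1)$, $\Omega_\gamma=\left\{z\in\mathbb{C}:\left|z+\frac{\gamma}{1-\gamma}\right|<\frac{1}{1-\gamma}\right\}$, the open disk with center $-\frac{\gamma}{1-\gamma}$ and radius $\frac{1}{1-\gamma}$. It contains the unit disk $\mathbb{D}$. The class $\mathcal{B}(\Omega_\gamma)$ consists of all analytic functions $f$ on $\Omega_\gamma$ with $f(\Omega_\gamma)\subseteq\overline{\mathbb{D}}$, that is, $|f|\le 1$ on $\Omega_\gamma$. The map $z\mapsto\gamma+(1-\gamma)z$ sends $\Omega_\gamma$ onto $\mathbb{D}$, and the parameter $\rho$ plays the role of $|\gamma+(1-\gamma)z|$. Since $\Omega_\gamma$ is a disk centered at $-\frac{\gamma}{1-\gamma}$, the Taylor expansion of $f$ about that center converges in all of $\Omega_\gamma$. *)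

(* Defs.v *)
From Stdlib Require Import Reals.
From Coquelicot Require Export Coquelicot.
Open Scope R_scope.

Definition Omega (gamma : R) (z : C) : Prop :=
  Cmod (Cplus z (RtoC (gamma / (1 - gamma)))) < 1 / (1 - gamma).

Definition in_B (gamma : R) (f : C -> C) : Prop :=
  (forall z, Omega gamma z -> ex_derive (K := C_AbsRing) (V := C_NormedModule) f z) /\
  (forall z, Omega gamma z -> Cmod (f z) <= 1).

Definition has_expansion (gamma : R) (f : C -> C) (a : nat -> C) : Prop :=
  forall z, Omega gamma z ->
    is_series (V := C_NormedModule)
      (fun n => Cmult (a n) (pow_n (K := C_Ring) (Cplus z (RtoC (gamma / (1 - gamma)))) n))
      (f z).

Definition Cf_term (gamma : R) (a : nat -> C) (rho : R) (n : nat) : R :=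
  / INR (n + 1) * sum_f_R0 (fun k => Cmod (a k) / (1 - gamma) ^ k) n * rho ^ n.

Definition Cf (gamma : R) (a : nat -> C) (rho : R) : R :=
  Series (Cf_term gamma a rho).

Definition log_bound (rho : R) : R := / rho * ln (/ (1 - rho)).

(* Main.v *)
Require Import Defs.
From Stdlib Require Import Reals.
From Coquelicot Require Import Coquelicot.
From Stdlib Require Import Lra Lia Psatz ZArith Arith.
Open Scope R_scope.

Definition lcoef (n : nat) : R := match n with O => 0 | S m => / INR (S m) end.

Lemma lcoef_der : forall n, PS_derive lcoef n = 1.
Proof. intros n; unfold PS_derive, lcoef. field. apply not_0_INR; lia. Qed.

Lemma CV_lcoef : CV_radius lcoef = 1.
Proof.
  rewrite <- CV_radius_derive.
  rewrite (CV_radius_ext _ (fun _ => 1)) by apply lcoef_der.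
  rewrite (CV_radius_finite_DAlembert _ 1).
  - simpl. f_equal. lra.
  - intros; lra.
  - lra.
  - eapply is_lim_seq_ext; [|apply is_lim_seq_const].
    intros n; simpl. rewrite Rdiv_1_l, Rinv_1, Rabs_R1. reflexivity.
Qed.

Lemma lcoef_deriv x : -1 < x < 1 -> is_derive (PSeries lcoef) x (/ (1 - x)).
Proof.
  intros Hx.
  assert (H := is_derive_PSeries lcoef x).
  rewrite CV_lcoef in H. simpl in H.
  assert (Hr : Rabs x < 1) by (apply Rabs_def1; lra).
  specialize (H Hr).
  replace (/ (1 - x)) with (PSeries (PS_derive lcoef) x); auto.
  rewrite (PSeries_ext _ (fun _ => 1)) by apply lcoef_der.
  unfold PSeries. apply is_series_unique.
  eapply is_series_ext; [|apply (is_series_geom x Hr)].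
  intros n; simpl. ring.
Qed.

Lemma lcoef_val x : 0 <= x < 1 -> PSeries lcoef x = - ln (1 - x).
Proof.
  intros Hx.
  destruct (Req_dec x 0) as [->|Hx0].
  { rewrite PSeries_0. simpl. rewrite Rminus_0_r, ln_1. ring. }
  set (G := fun t => PSeries lcoef t + ln (1 - t)).
  assert (E : G 0 = G x).
  { apply eq_is_derive; [|lra].
    intros t Ht. unfold G.
    replace (@zero R_NormedModule) with (/ (1 - t) + (-1) * / (1 - t))
      by (simpl; unfold zero; simpl; ring).
    apply (is_derive_plus (V := R_NormedModule)).
    - apply lcoef_deriv; lra.
    - auto_derive. lra. field. lra. }
  unfold G in E. rewrite PSeries_0 in E. simpl in E.
  rewrite Rminus_0_r, ln_1 in E. lra.
Qed.

Lemma log_series rho : 0 < rho < 1 ->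
  is_series (fun n => rho ^ n / INR (n + 1)) (log_bound rho).
Proof.
  intros Hr.
  assert (H : is_series (fun n => lcoef n * rho ^ n) (- ln (1 - rho))).
  { rewrite <- lcoef_val by lra.
    eapply is_series_ext; [|apply PSeries_correct].
    { intros n. simpl. rewrite pow_n_pow. unfold scal; simpl; unfold mult; simpl. ring. }
    apply CV_radius_inside. rewrite CV_lcoef. simpl. rewrite Rabs_pos_eq; lra. }
  assert (H1 : is_series (fun k => lcoef (S k) * rho ^ (S k)) (- ln (1 - rho))).
  { apply (is_series_incr_1 (fun k => lcoef k * rho ^ k)). simpl. unfold plus; simpl. rewrite Rmult_0_l, Rplus_0_r. exact H. }
  apply (is_series_scal_l (/ rho)) in H1.
  unfold log_bound.
  replace (/ (1 - rho)) with (/ (1 - rho)) by reflexivity.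
  rewrite ln_Rinv by lra.
  assert (Hn : forall n, rho^n / INR (n+1) = / rho * (/ INR (S n) * rho^(S n))).
  { intros n. rewrite Nat.add_1_r. rewrite <- tech_pow_Rmult. field. split; [apply not_0_INR; lia|lra]. }
  eapply is_series_ext; [|exact H1].
  intros n. symmetry. exact (Hn n).
Qed.

Fixpoint fsum (N : nat) (f : nat -> R) : R :=
  match N with O => 0 | S n => fsum n f + f n end.

Lemma fsum_ext N f g : (forall j, (j < N)%nat -> f j = g j) -> fsum N f = fsum N g.
Proof. induction N; simpl; intros H; auto. rewrite IHN by (intros; apply H; lia). rewrite H by lia. auto. Qed.
Lemma fsum_plus N f g : fsum N (fun j => f j + g j) = fsum N f + fsum N g.
Proof. induction N; simpl; [ring|]. rewrite IHN. ring. Qed.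
Lemma fsum_scal N c f : fsum N (fun j => c * f j) = c * fsum N f.
Proof. induction N; simpl; [ring|]. rewrite IHN. ring. Qed.
Lemma fsum_const N c : fsum N (fun _ => c) = INR N * c.
Proof. induction N; cbn [fsum]; [simpl; ring|]. rewrite IHN, S_INR. ring. Qed.
Lemma fsum_le N f g : (forall j, (j < N)%nat -> f j <= g j) -> fsum N f <= fsum N g.
Proof. induction N; simpl; intros H; [lra|]. assert (f N <= g N) by (apply H; lia).
  assert (fsum N f <= fsum N g) by (apply IHN; intros; apply H; lia). lra. Qed.

Lemma sin_periodZ y (m : Z) : sin (y + 2 * PI * IZR m) = sin y.
Proof.
  destruct (Z_le_gt_dec 0 m) as [H|H].
  - rewrite <- (Z2Nat.id m H), <- INR_IZR_INZ.
    rewrite <- (sin_period y (Z.to_nat m)). f_equal. ring.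
  - assert (H' : (0 <= - m)%Z) by lia.
    rewrite <- (sin_period (y + 2 * PI * IZR m) (Z.to_nat (- m))).
    rewrite INR_IZR_INZ, Z2Nat.id by lia. rewrite opp_IZR. f_equal. ring.
Qed.

Section Orth.
Variable N : nat.
Hypothesis HN : (0 < N)%nat.
Let th := 2 * PI / INR N.

Lemma telescope (x psi : R) (n : nat) :
  2 * sin (x / 2) * fsum n (fun j => cos (INR j * x + psi)) =
  sin ((INR n - /2) * x + psi) - sin (- (x / 2) + psi).
Proof.
  induction n.
  - cbn [fsum]. replace ((INR 0 - /2) * x + psi) with (- (x/2) + psi) by (simpl; field). ring.
  - cbn [fsum]. rewrite Rmult_plus_distr_l, IHn, S_INR.
    replace ((INR n + 1 - /2) * x + psi) with ((INR n * x + psi) + x / 2) by field.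
    replace ((INR n - /2) * x + psi) with ((INR n * x + psi) - x / 2) by field.
    rewrite (sin_plus (INR n * x + psi) (x/2)), (sin_minus (INR n * x + psi) (x/2)). ring.
Qed.

Lemma sum_cos_Z (m : Z) (psi : R) : ~ (Z.divide (Z.of_nat N) m) ->
  fsum N (fun j => cos (IZR m * (INR j * th) + psi)) = 0.
Proof.
  intros Hd.
  set (x := IZR m * th).
  assert (HNr : 0 < INR N) by (apply lt_0_INR; lia).
  rewrite (fsum_ext N _ (fun j => cos (INR j * x + psi))) by (intros; unfold x; f_equal; ring).
  assert (Hs : sin (x / 2) <> 0).
  { intros Hs. apply sin_eq_0_0 in Hs. destruct Hs as [k Hk].
    apply Hd. exists k. apply eq_IZR. rewrite mult_IZR, <- INR_IZR_INZ.
    unfold x, th in Hk. 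
    assert (HPI : 0 < PI) by apply PI_RGT_0.
    apply (Rmult_eq_reg_r (PI / INR N)); [|apply Rgt_not_eq; apply Rdiv_lt_0_compat; lra].
    replace (IZR k * INR N * (PI / INR N)) with (IZR k * PI) by (field; lra).
    rewrite <- Hk. field. lra. }
  assert (T := telescope x psi N).
  replace ((INR N - /2) * x + psi) with ((- (x/2) + psi) + 2 * PI * IZR m) in T
    by (unfold x, th; field; lra).
  rewrite sin_periodZ in T.
  apply (Rmult_eq_reg_l (2 * sin (x / 2))); [|lra]. rewrite T. ring.
Qed.

Lemma sum_sin_Z (m : Z) : ~ (Z.divide (Z.of_nat N) m) ->
  fsum N (fun j => sin (IZR m * (INR j * th))) = 0.
Proof.
  intros Hd. rewrite <- (sum_cos_Z m (- (PI/2))) by auto.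
  apply fsum_ext. intros j _. 
  rewrite Rplus_comm, cos_plus, cos_neg, sin_neg, cos_PI2, sin_PI2. ring.
Qed.

Definition Cs (m : Z) := fsum N (fun j => cos (IZR m * (INR j * th))).
Definition Ss (m : Z) := fsum N (fun j => sin (IZR m * (INR j * th))).

Lemma Cs0 : Cs 0 = INR N.
Proof. unfold Cs. rewrite (fsum_ext N _ (fun _ => 1)). rewrite fsum_const; ring.
  intros; rewrite Rmult_0_l, cos_0; auto. Qed.
Lemma Ss0 : Ss 0 = 0.
Proof. unfold Ss. rewrite (fsum_ext N _ (fun _ => 0)). rewrite fsum_const; ring.
  intros; rewrite Rmult_0_l, sin_0; auto. Qed.
Lemma CsZ m : ~ (Z.divide (Z.of_nat N) m) -> Cs m = 0.
Proof. intros H. unfold Cs. rewrite <- (sum_cos_Z m 0 H). apply fsum_ext; intros; rewrite Rplus_0_r; auto. Qed.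
Lemma SsZ m : ~ (Z.divide (Z.of_nat N) m) -> Ss m = 0.
Proof. intros H. apply sum_sin_Z; auto. Qed.

Definition tj (j : nat) := INR j * th.

Lemma fsum4 f1 f2 f3 f4 c1 c2 c3 c4 :
  fsum N (fun j => c1 * f1 j + c2 * f2 j + c3 * f3 j + c4 * f4 j) =
  c1 * fsum N f1 + c2 * fsum N f2 + c3 * fsum N f3 + c4 * fsum N f4.
Proof. rewrite !fsum_plus, !fsum_scal. ring. Qed.

Lemma prod_sum x y X Y (n k : nat) :
  fsum N (fun j => (x * cos (INR n * tj j) - y * sin (INR n * tj j)) *
                   (X * cos (INR k * tj j) - Y * sin (INR k * tj j))) =
  / 2 * ((x*X - y*Y) * Cs (Z.of_nat n + Z.of_nat k) - (x*Y + y*X) * Ss (Z.of_nat n + Z.of_nat k)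
        + (x*X + y*Y) * Cs (Z.of_nat n - Z.of_nat k) + (x*Y - y*X) * Ss (Z.of_nat n - Z.of_nat k)).
Proof.
  unfold Cs, Ss.
  rewrite (fsum_ext N _ (fun j => / 2 * (
     (x*X - y*Y) * cos (IZR (Z.of_nat n + Z.of_nat k) * (INR j * th))
   + (- (x*Y + y*X)) * sin (IZR (Z.of_nat n + Z.of_nat k) * (INR j * th))
   + (x*X + y*Y) * cos (IZR (Z.of_nat n - Z.of_nat k) * (INR j * th))
   + (x*Y - y*X) * sin (IZR (Z.of_nat n - Z.of_nat k) * (INR j * th))))).
  { rewrite fsum_scal, fsum4. ring. }
  intros j _. unfold tj.
  rewrite plus_IZR, minus_IZR, <- !INR_IZR_INZ.
  set (t := INR j * th).
  replace ((INR n + INR k) * t) with (INR n * t + INR k * t) by ring.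
  replace ((INR n - INR k) * t) with (INR n * t - INR k * t) by ring.
  rewrite cos_plus, sin_plus, cos_minus, sin_minus. field.
Qed.

Lemma single_sum x y (n : nat) :
  fsum N (fun j => x * cos (INR n * tj j) - y * sin (INR n * tj j)) =
  x * Cs (Z.of_nat n) - y * Ss (Z.of_nat n).
Proof.
  unfold Cs, Ss.
  rewrite (fsum_ext N _ (fun j => x * cos (IZR (Z.of_nat n) * (INR j * th)) + (- y) * sin (IZR (Z.of_nat n) * (INR j * th)))).
  { rewrite fsum_plus, !fsum_scal. ring. }
  intros j _. unfold tj. rewrite <- INR_IZR_INZ. ring.
Qed.

Definition Kj X Y B (k j : nat) := 1 + (X * cos (INR k * tj j) - Y * sin (INR k * tj j)) / B.

Lemma avg_gen x y X Y B n k : B <> 0 ->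
  fsum N (fun j => Kj X Y B k j * (x * cos (INR n * tj j) - y * sin (INR n * tj j))) =
  x * Cs (Z.of_nat n) - y * Ss (Z.of_nat n) + / B * (/ 2 * ((x*X - y*Y) * Cs (Z.of_nat n + Z.of_nat k) - (x*Y + y*X) * Ss (Z.of_nat n + Z.of_nat k)
        + (x*X + y*Y) * Cs (Z.of_nat n - Z.of_nat k) + (x*Y - y*X) * Ss (Z.of_nat n - Z.of_nat k))).
Proof.
  intros HB. rewrite <- prod_sum, <- single_sum, <- fsum_scal, <- fsum_plus.
  apply fsum_ext; intros j _. unfold Kj. field. auto.
Qed.

End Orth.

Lemma sum_n_fst (u : nat -> C) n : fst (sum_n u n) = sum_n (fun k => fst (u k)) n.
Proof.
  induction n.
  - rewrite !sum_O. auto.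
  - rewrite !sum_Sn. rewrite <- IHn. reflexivity.
Qed.
Lemma sum_n_snd (u : nat -> C) n : snd (sum_n u n) = sum_n (fun k => snd (u k)) n.
Proof.
  induction n.
  - rewrite !sum_O. auto.
  - rewrite !sum_Sn. rewrite <- IHn. reflexivity.
Qed.

Lemma proj_fst (u : nat -> C) l : is_series (V := C_NormedModule) u l -> is_series (fun n => fst (u n)) (fst l).
Proof.
  intros H P [eps HP].
  assert (Hl : locally (T := C_UniformSpace) l (fun z => P (fst z))).
  { exists eps. intros z [Hz _]. apply HP. exact Hz. }
  specialize (H _ Hl). destruct H as [M HM]. exists M. intros n Hn.
  specialize (HM n Hn). cbv beta in HM. rewrite sum_n_fst in HM. exact HM.
Qed.
Lemma proj_snd (u : nat -> C) l : is_series (V := C_NormedModule) u l -> is_series (fun n => snd (u n)) (snd l).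
Proof.
  intros H P [eps HP].
  assert (Hl : locally (T := C_UniformSpace) l (fun z => P (snd z))).
  { exists eps. intros z [_ Hz]. apply HP. exact Hz. }
  specialize (H _ Hl). destruct H as [M HM]. exists M. intros n Hn.
  specialize (HM n Hn). cbv beta in HM. rewrite sum_n_snd in HM. exact HM.
Qed.

Lemma demoivre rho t n :
  pow_n (K := C_Ring) (rho * cos t, rho * sin t) n = (rho ^ n * cos (INR n * t), rho ^ n * sin (INR n * t)).
Proof.
  induction n.
  - simpl pow_n. rewrite Rmult_0_l, cos_0, sin_0. change (@one C_Ring) with (RtoC 1). unfold RtoC. simpl pow. f_equal; ring.
  - change (pow_n (K := C_Ring) (rho * cos t, rho * sin t) (S n)) with
      (Cmult (rho * cos t, rho * sin t) (pow_n (K := C_Ring) (rho * cos t, rho * sin t) n)).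
    rewrite IHn. rewrite S_INR.
    replace ((INR n + 1) * t) with (INR n * t + t) by ring.
    rewrite cos_plus, sin_plus. unfold Cmult; simpl. f_equal; ring.
Qed.

Lemma Cmod_le_sum (z : C) : Cmod z <= Rabs (fst z) + Rabs (snd z).
Proof.
  destruct z as [a b]. unfold Cmod; simpl fst; simpl snd.
  pose proof (Rabs_pos a); pose proof (Rabs_pos b).
  rewrite <- (sqrt_pow2 (Rabs a + Rabs b)) by lra.
  apply sqrt_le_1_alt.
  replace (a ^ 2) with (Rabs a ^ 2) by apply pow2_abs.
  replace (b ^ 2) with (Rabs b ^ 2) by apply pow2_abs.
  nra.
Qed.

Lemma lim0_bounded (u : nat -> R) : is_lim_seq u 0 -> exists M, forall n, Rabs (u n) <= M.
Proof.
  intros H. destruct (proj2 (is_lim_seq_spec u 0) H (mkposreal 1 Rlt_0_1)) as [N HN].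
  assert (Hfin : forall K, exists M, forall n, (n < K)%nat -> Rabs (u n) <= M).
  { induction K.
    - exists 0. intros; lia.
    - destruct IHK as [M HM]. exists (Rmax M (Rabs (u K))). intros n Hn.
      destruct (Nat.eq_dec n K) as [->|Hne].
      + apply Rmax_r.
      + eapply Rle_trans; [apply HM; lia|apply Rmax_l]. }
  destruct (Hfin N) as [M HM]. exists (Rmax M 1). intros n.
  destruct (le_lt_dec N n) as [Hn|Hn].
  - specialize (HN n Hn). simpl in HN. rewrite Rminus_0_r in HN. eapply Rle_trans; [|apply Rmax_r]. lra.
  - eapply Rle_trans; [apply HM; auto|apply Rmax_l].
Qed.

Lemma cseries_bounded (u : nat -> C) l : is_series (V := C_NormedModule) u l -> exists M, forall n, Cmod (u n) <= M.
Proof.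
  intros H.
  assert (H1 := proj_fst u l H). assert (H2 := proj_snd u l H).
  assert (L1 : is_lim_seq (fun n => fst (u n)) 0) by (apply ex_series_lim_0; eexists; eauto).
  assert (L2 : is_lim_seq (fun n => snd (u n)) 0) by (apply ex_series_lim_0; eexists; eauto).
  destruct (lim0_bounded _ L1) as [M1 HM1]. destruct (lim0_bounded _ L2) as [M2 HM2].
  exists (M1 + M2). intros n. eapply Rle_trans; [apply Cmod_le_sum|].
  specialize (HM1 n); specialize (HM2 n); lra.
Qed.

Lemma unit_rot (a0 : C) : exists v : C, Cmod v = 1 /\ Cmult v a0 = (Cmod a0, 0).
Proof.
  destruct (Req_dec (Cmod a0) 0) as [H0|H0].
  - exists (RtoC 1). split. apply Cmod_1. apply Cmod_eq_0 in H0. rewrite H0.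
    rewrite Cmod_0. unfold Cmult, RtoC; simpl. f_equal; ring.
  - destruct a0 as [x y]. set (m := Cmod (x, y)) in *.
    assert (Hm : m ^ 2 = x ^ 2 + y ^ 2).
    { unfold m, Cmod. simpl fst; simpl snd. rewrite pow2_sqrt; auto.
      nra. }
    exists (x / m, - y / m). split.
    + unfold Cmod; simpl fst; simpl snd.
      replace ((x / m) ^ 2 + (- y / m) ^ 2) with 1. apply sqrt_1.
      field_simplify; [|auto]. rewrite <- Hm. field. auto.
    + unfold Cmult; simpl. f_equal; [|field; auto].
      apply (Rmult_eq_reg_r m); [|auto]. field_simplify; auto.
Qed.

Lemma lin_bound x y c s : c ^ 2 + s ^ 2 = 1 -> Rabs (x * c - y * s) <= sqrt (x ^ 2 + y ^ 2).
Proof.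
  intros H. rewrite <- sqrt_pow2 with (x := Rabs _) by apply Rabs_pos.
  apply sqrt_le_1_alt. rewrite pow2_abs.
  assert (E : (x * c - y * s) ^ 2 + (x * s + y * c) ^ 2 = (x ^ 2 + y ^ 2) * (c ^ 2 + s ^ 2)) by ring.
  rewrite H in E. pose proof (pow2_ge_0 (x * s + y * c)). lra.
Qed.

Lemma cs1 t : cos t ^ 2 + sin t ^ 2 = 1.
Proof. pose proof (sin2_cos2 t). unfold Rsqr in H. simpl. lra. Qed.

Lemma ndiv N (m : Z) : (0 < Z.abs m < Z.of_nat N)%Z -> ~ Z.divide (Z.of_nat N) m.
Proof.
  intros H Hd. apply Z.divide_abs_r in Hd. apply Z.divide_pos_le in Hd; lia.
Qed.

Section Avg.
Variables (N k : nat) (X Y B : R).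
Hypothesis HN : (2 * k < N)%nat.
Hypothesis Hk : (1 <= k)%nat.
Hypothesis HB : 0 < B.
Hypothesis HXY : X ^ 2 + Y ^ 2 = B ^ 2.

Let N0 : (0 < N)%nat. Proof. lia. Qed.
Let HB0 : B <> 0. Proof. lra. Qed.

Definition Tn (x y : R) (n : nat) :=
  / INR N * fsum N (fun j => Kj N X Y B k j * (x * cos (INR n * tj N j) - y * sin (INR n * tj N j))).

Lemma K_bounds j : 0 <= Kj N X Y B k j <= 2.
Proof.
  unfold Kj.
  assert (H := lin_bound X Y (cos (INR k * tj N j)) (sin (INR k * tj N j)) (cs1 _)).
  rewrite HXY, sqrt_pow2 in H by lra.
  apply Rabs_le_between in H.
  split.
  - apply Rle_trans with (1 + (-B)/B); [right; field; lra|]. 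
    apply Rplus_le_compat_l. apply Rmult_le_compat_r; [left; apply Rinv_0_lt_compat; lra|lra].
  - apply Rle_trans with (1 + B/B); [|right; field; lra].
    apply Rplus_le_compat_l. apply Rmult_le_compat_r; [left; apply Rinv_0_lt_compat; lra|lra].
Qed.

Ltac zz := first [ apply (CsZ N N0); apply ndiv; lia | apply (SsZ N N0); apply ndiv; lia ].

Lemma T0 x y : Tn x y 0 = x.
Proof.
  unfold Tn. rewrite avg_gen by auto.
  replace (Z.of_nat 0) with 0%Z by auto.
  rewrite Cs0, Ss0, Z.add_0_l, Z.sub_0_l.
  rewrite !(CsZ N N0), !(SsZ N N0) by (apply ndiv; lia).
  assert (0 < INR N) by (apply lt_0_INR; lia). field. lra.
Qed.

Lemma Tk : Tn X Y k = B / 2.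
Proof.
  unfold Tn. rewrite avg_gen by auto.
  rewrite Z.sub_diag, Cs0, Ss0.
  rewrite !(CsZ N N0), !(SsZ N N0) by (apply ndiv; lia).
  assert (0 < INR N) by (apply lt_0_INR; lia).
  replace (X * X + Y * Y) with (B ^ 2) by (rewrite <- HXY; ring).
  field. lra.
Qed.

Lemma Tk0 : Tn 0 0 k = 0.
Proof.
  unfold Tn. rewrite (fsum_ext N _ (fun _ => 0)).
  - rewrite fsum_const. ring.
  - intros; ring.
Qed.

Lemma Tother x y n : (1 <= n)%nat -> n <> k -> (n + k < N)%nat -> Tn x y n = 0.
Proof.
  intros H1 H2 H3.
  unfold Tn. rewrite avg_gen by auto.
  rewrite !(CsZ N N0), !(SsZ N N0) by (apply ndiv; lia).
  ring.
Qed.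

Lemma Tbound x y n : Rabs (Tn x y n) <= 2 * sqrt (x ^ 2 + y ^ 2).
Proof.
  set (C := sqrt (x ^ 2 + y ^ 2)).
  assert (0 < INR N) by (apply lt_0_INR; lia).
  assert (Hb : forall j, -(2 * C) <= Kj N X Y B k j * (x * cos (INR n * tj N j) - y * sin (INR n * tj N j)) <= 2 * C).
  { intros j. pose proof (K_bounds j).
    assert (H1 := lin_bound x y (cos (INR n * tj N j)) (sin (INR n * tj N j)) (cs1 _)).
    fold C in H1. apply Rabs_le_between in H1.
    assert (0 <= C) by apply sqrt_pos. nra. }
  unfold Tn. apply Rabs_le_between. split.
  - apply Rle_trans with (/ INR N * fsum N (fun _ => - (2 * C))).
    + rewrite fsum_const. right. field. lra.
    + apply Rmult_le_compat_l; [left; apply Rinv_0_lt_compat; lra|].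
      apply fsum_le. intros j _. apply Hb.
  - apply Rle_trans with (/ INR N * fsum N (fun _ => (2 * C))).
    + apply Rmult_le_compat_l; [left; apply Rinv_0_lt_compat; lra|].
      apply fsum_le. intros j _. apply Hb.
    + rewrite fsum_const. right. field. lra.
Qed.

Lemma Ksum : / INR N * fsum N (fun j => Kj N X Y B k j) = 1.
Proof.
  rewrite <- (T0 1 0). unfold Tn. f_equal. apply fsum_ext. intros j _.
  simpl INR. rewrite Rmult_0_l, cos_0, sin_0. ring.
Qed.

End Avg.

Lemma sum_n_zero (u : nat -> R) K : (forall n, (n <= K)%nat -> u n = 0) -> sum_n u K = 0.
Proof.
  induction K; intros H.
  - rewrite sum_O. apply H; lia.
  - rewrite sum_Sn, IHK by (intros; apply H; lia). rewrite H by lia. apply (plus_zero_r (G:=R_AbelianMonoid)).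
Qed.

Lemma finsupp_series (u : nat -> R) K : (forall n, (K < n)%nat -> u n = 0) -> is_series u (sum_n u K).
Proof.
  intros H. unfold is_series.
  apply filterlim_ext_loc with (fun _ => sum_n u K); [|apply filterlim_const].
  exists K. intros n Hn. induction n.
  - assert (K = 0)%nat by lia. subst. auto.
  - destruct (Nat.eq_dec K (S n)) as [->|Hne]; auto.
    rewrite sum_Sn, <- IHn by lia. rewrite H by lia. symmetry; apply (plus_zero_r (G:=R_AbelianMonoid)).
Qed.

Lemma series_delta (k : nat) (c : R) : is_series (fun n => if Nat.eqb n k then c else 0) c.
Proof.
  set (u := fun n => if Nat.eqb n k then c else 0).
  assert (Hs : sum_n u k = c).
  { destruct k.
    + rewrite sum_O. auto.
    + rewrite sum_Sn, sum_n_zero.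
      * unfold u. rewrite Nat.eqb_refl. apply (plus_zero_l (G:=R_AbelianMonoid)).
      * intros n Hn. unfold u. destruct (Nat.eqb_spec n (S k)); [lia|auto]. }
  assert (H := finsupp_series u k).
  rewrite Hs in H. apply H.
  intros n Hn. unfold u. destruct (Nat.eqb_spec n k); [lia|auto].
Qed.

Lemma bernoulli_low r k : 0 <= r <= 1 -> 1 - INR k * (1 - r) <= r ^ k.
Proof.
  intros Hr. induction k.
  - simpl. lra.
  - rewrite S_INR. simpl pow. 
    assert (0 <= INR k) by apply pos_INR.
    assert (0 <= r * (r ^ k - (1 - INR k * (1 - r)))) by (apply Rmult_le_pos; lra).
    assert (0 <= INR k * ((1 - r) * (1 - r))) by (apply Rmult_le_pos; nra).
    nra.
Qed.

Lemma rot_series (a : nat -> C) (v : C) (rho t : R) (V : C) :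
  is_series (V := C_NormedModule) (fun n => Cmult (a n) (rho ^ n * cos (INR n * t), rho ^ n * sin (INR n * t))) V ->
  is_series (fun n => rho ^ n * (fst (Cmult v (a n)) * cos (INR n * t) - snd (Cmult v (a n)) * sin (INR n * t))) (fst (Cmult v V)).
Proof.
  intros H. apply (is_series_scal_l (V := C_NormedModule) v) in H.
  apply proj_fst in H.
  eapply is_series_ext; [|exact H].
  intros n. cbv beta. change (scal v ?w) with (Cmult v w).
  rewrite Cmult_assoc. destruct (Cmult v (a n)) as [p q]. simpl. ring.
Qed.

Lemma pow_le_dec s m n : 0 <= s <= 1 -> (m <= n)%nat -> s ^ n <= s ^ m.
Proof.
  intros Hs Hmn. induction Hmn; [lra|].
  simpl. assert (0 <= s ^ m0) by (apply pow_le; lra). nra.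
Qed.

Lemma zero_series : is_series (fun _ : nat => 0) 0.
Proof.
  assert (H := finsupp_series (fun _ => 0) 0 (fun _ _ => eq_refl)).
  rewrite sum_O in H. exact H.
Qed.

Section Core.
Variables (a : nat -> C) (R0 : R) (k : nat).
Hypothesis HR0 : 0 < R0.
Hypothesis Hk : (1 <= k)%nat.
Variables (x y : nat -> R).
Hypothesis Hxy : forall n, sqrt (x n ^ 2 + y n ^ 2) = Cmod (a n).
Hypothesis HB : forall r t, 0 <= r < 1 -> exists W,
  is_series (fun n => (r * R0) ^ n * (x n * cos (INR n * t) - y n * sin (INR n * t))) W /\ W <= 1.

Lemma avg_series N r X Y Bk : (0 < N)%nat -> 0 <= r < 1 ->
  (forall j, 0 <= Kj N X Y Bk k j) ->
  forall J, (J <= N)%nat -> exists S,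
  is_series (fun n => fsum J (fun j => Kj N X Y Bk k j / INR N *
     ((r * R0) ^ n * (x n * cos (INR n * tj N j) - y n * sin (INR n * tj N j))))) S
  /\ S <= fsum J (fun j => Kj N X Y Bk k j / INR N).
Proof.
  intros HN Hr HK. induction J; intros HJ.
  - exists 0. split; [apply zero_series|simpl; lra].
  - destruct IHJ as [S [HS HSle]]; [lia|].
    destruct (HB r (tj N J) Hr) as [W [HW HWle]].
    apply (is_series_scal_l (Kj N X Y Bk k J / INR N)) in HW.
    assert (HP := is_series_plus _ _ _ _ HS HW).
    exists (S + Kj N X Y Bk k J / INR N * W). split.
    + eapply is_series_ext; [|exact HP]. intros n. reflexivity.
    + cbn [fsum]. assert (0 < INR N) by (apply lt_0_INR; lia).
      assert (0 <= Kj N X Y Bk k J / INR N) by (apply Rdiv_le_0_compat; auto).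
      nra.
Qed.


Lemma claim N r r' M X Y Bk :
  (2 * k < N)%nat -> 0 < r -> r < r' -> r' < 1 ->
  (forall n, Cmod (a n) * (r' * R0) ^ n <= M) ->
  0 < Bk -> X ^ 2 + Y ^ 2 = Bk ^ 2 ->
  Tn N k X Y Bk (x k) (y k) k = Cmod (a k) / 2 ->
  x 0%nat + (r * R0) ^ k * (Cmod (a k) / 2) - 1 <= 2 * M / (1 - sqrt (r / r')) * sqrt (r / r') ^ (N - k).
Proof.
  intros HN Hr Hrr Hr1 HM HBk HXY HTk.
  assert (N0 : (0 < N)%nat) by lia.
  assert (HNr : 0 < INR N) by (apply lt_0_INR; lia).
  set (rho := r * R0).
  set (q := r / r').
  assert (Hq : 0 < q < 1).
  { unfold q. split. apply Rdiv_lt_0_compat; lra. apply Rlt_div_l; lra. }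
  set (s := sqrt q).
  assert (Hs : 0 < s < 1).
  { unfold s. split. apply sqrt_lt_R0; lra. rewrite <- sqrt_1. apply sqrt_lt_1_alt; lra. }
  assert (Hss : s * s = q) by (apply sqrt_sqrt; lra).
  assert (HK : forall j, 0 <= Kj N X Y Bk k j <= 2) by (intros; apply K_bounds; auto; lia).
  destruct (avg_series N r X Y Bk N0 (conj (Rlt_le _ _ Hr) (Rlt_trans _ _ _ Hrr Hr1)) (fun j => proj1 (HK j)) N (le_n N))
    as [S [HS HSle]].
  assert (HS1 : S <= 1).
  { eapply Rle_trans; [exact HSle|]. right.
    rewrite <- (Ksum N k X Y Bk HN Hk HBk).
    rewrite <- fsum_scal. apply fsum_ext. intros; unfold Rdiv; ring. }
  set (T := fun n => Tn N k X Y Bk (x n) (y n) n).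
  assert (Heq : forall n, fsum N (fun j => Kj N X Y Bk k j / INR N *
     ((r * R0) ^ n * (x n * cos (INR n * tj N j) - y n * sin (INR n * tj N j)))) = rho ^ n * T n).
  { intros n. unfold T, Tn.
    rewrite (fsum_ext N _ (fun j => rho ^ n * / INR N * (Kj N X Y Bk k j *
       (x n * cos (INR n * tj N j) - y n * sin (INR n * tj N j))))).
    - rewrite fsum_scal. ring.
    - intros; unfold rho; field; lra. }
  assert (HS' : is_series (fun n => rho ^ n * T n) S).
  { eapply is_series_ext; [|exact HS]. intros n. exact (Heq n). }
  set (c := rho ^ k * (Cmod (a k) / 2)).
  set (e := fun n => (if Nat.eqb n 0 then x 0%nat else 0) + (if Nat.eqb n k then c else 0)).
  assert (He : is_series e (x 0%nat + c)).
  { apply (is_series_plus _ _ _ _ (series_delta 0 (x 0%nat)) (series_delta k c)). }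
  assert (HE := is_series_minus _ _ _ _ HS' He).
  set (E := fun n => rho ^ n * T n - e n).
  assert (HE' : is_series E (S - (x 0%nat + c))).
  { eapply is_series_ext; [|exact HE]. intros n. reflexivity. }
  set (G := 2 * M * s ^ (N - k)).
  assert (HM0 : 0 <= M).
  { eapply Rle_trans; [|apply (HM 0%nat)]. simpl. rewrite Rmult_1_r. apply Cmod_ge_0. }
  assert (HG : 0 <= G) by (unfold G; assert (0 <= s ^ (N - k)) by (apply pow_le; lra); nra).
  assert (Hsn : forall n, 0 <= s ^ n) by (intros; apply pow_le; lra).
  assert (Hbound : forall n, Rabs (E n) <= G * s ^ n).
  { intros n. unfold E, e.
    destruct (lt_dec n (N - k)) as [Hlt|Hge].
    - destruct (Nat.eqb_spec n 0) as [->|Hn0].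
      + destruct (Nat.eqb_spec 0 k) as [|_]; [lia|].
        unfold T. rewrite T0 by (auto; lia). simpl pow. rewrite Rplus_0_r, Rmult_1_l, Rminus_diag, Rabs_R0.
        specialize (Hsn 0%nat). nra.
      + destruct (Nat.eqb_spec n k) as [->|Hnk].
        * unfold T. rewrite HTk. unfold c. rewrite Rplus_0_l, Rminus_diag, Rabs_R0.
          specialize (Hsn k). nra.
        * unfold T. rewrite Tother by (auto; lia). rewrite Rplus_0_l, Rmult_0_r, Rminus_0_r, Rabs_R0.
          specialize (Hsn n). nra.
    - destruct (Nat.eqb_spec n 0) as [->|Hn0]; [lia|].
      destruct (Nat.eqb_spec n k) as [->|Hnk]; [lia|].
      rewrite Rplus_0_l, Rminus_0_r.
      assert (HT := Tbound N k X Y Bk HN Hk HBk HXY (x n) (y n) n).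
      fold (T n) in HT. rewrite Hxy in HT.
      assert (Hrho : rho = (r' * R0) * q) by (unfold rho, q; field; lra).
      assert (Hrho0 : 0 <= rho) by (unfold rho; nra).
      rewrite Rabs_mult, Rabs_pos_eq by (apply pow_le; auto).
      assert (H1 : rho ^ n * Rabs (T n) <= rho ^ n * (2 * Cmod (a n))) by (apply Rmult_le_compat_l; auto; apply pow_le; auto).
      eapply Rle_trans; [exact H1|].
      rewrite Hrho, Rpow_mult_distr.
      specialize (HM n).
      assert (Hqn : q ^ n <= s ^ (N - k) * s ^ n).
      { rewrite <- Hss, Rpow_mult_distr. apply Rmult_le_compat_r; auto.
        apply pow_le_dec; [lra|lia]. }
      assert (0 <= q ^ n) by (apply pow_le; lra).
      assert (0 <= Cmod (a n)) by apply Cmod_ge_0.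
      unfold G.
      replace ((r' * R0) ^ n * q ^ n * (2 * Cmod (a n))) with (2 * (Cmod (a n) * (r' * R0) ^ n) * q ^ n) by ring.
      replace (2 * M * s ^ (N - k) * s ^ n) with (2 * M * (s ^ (N - k) * s ^ n)) by ring.
      apply Rmult_le_compat; try lra.
      apply Rmult_le_pos; [lra|]. apply Rmult_le_pos; auto. apply pow_le. nra. }
  assert (Hgeo : is_series (fun n => G * s ^ n) (G * / (1 - s))).
  { apply (is_series_scal_l (V:=R_NormedModule) G (fun n => s ^ n) (/ (1 - s))). apply is_series_geom. rewrite Rabs_pos_eq; lra. }
  assert (HexA : ex_series (fun n => Rabs (E n))).
  { refine (ex_series_le (K:=R_AbsRing) (V:=R_CompleteNormedModule) (fun n => Rabs (E n)) (fun n => G * s ^ n) _ _); [|eexists; exact Hgeo].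
    intros n. unfold norm; simpl. rewrite Rabs_Rabsolu. apply Hbound. }
  assert (H1 := Series_Rabs E HexA).
  rewrite (is_series_unique _ _ HE') in H1.
  assert (H2 : Series (fun n => Rabs (E n)) <= Series (fun n => G * s ^ n)).
  { apply Series_le; [|eexists; exact Hgeo]. intros n; split; [apply Rabs_pos|apply Hbound]. }
  rewrite (is_series_unique _ _ Hgeo) in H2.
  apply Rabs_le_between in H1. 
  assert (Hfin : x 0%nat + c - 1 <= G * / (1 - s)) by lra.
  unfold c, rho, G in Hfin. fold q s.
  eapply Rle_trans; [exact Hfin|]. right. field. lra.
Qed.

End Core.

Lemma Cmod_pair (z : C) : Cmod z = sqrt (fst z ^ 2 + snd z ^ 2).
Proof. destruct z; reflexivity. Qed.

Lemma core (a : nat -> C) (R0 : R) (k : nat) :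
  0 < R0 -> (1 <= k)%nat ->
  (forall r t, 0 <= r < 1 -> exists V : C,
     is_series (V := C_NormedModule)
       (fun n => Cmult (a n) ((r * R0) ^ n * cos (INR n * t), (r * R0) ^ n * sin (INR n * t))) V
     /\ Cmod V <= 1) ->
  Cmod (a 0%nat) + R0 ^ k * Cmod (a k) / 2 <= 1.
Proof.
  intros HR0 Hk H.
  destruct (unit_rot (a 0%nat)) as [v [Hv Hva]].
  set (x := fun n => fst (Cmult v (a n))).
  set (y := fun n => snd (Cmult v (a n))).
  assert (Hxy : forall n, sqrt (x n ^ 2 + y n ^ 2) = Cmod (a n)).
  { intros n. unfold x, y. rewrite <- Cmod_pair, Cmod_mult, Hv. ring. }
  assert (Hx0 : x 0%nat = Cmod (a 0%nat)) by (unfold x; rewrite Hva; auto).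
  assert (HB : forall r t, 0 <= r < 1 -> exists W,
    is_series (fun n => (r * R0) ^ n * (x n * cos (INR n * t) - y n * sin (INR n * t))) W /\ W <= 1).
  { intros r t Hr. destruct (H r t Hr) as [V [HV HV1]].
    exists (fst (Cmult v V)). split.
    - apply rot_series. exact HV.
    - eapply Rle_trans; [apply Rle_abs|]. eapply Rle_trans; [apply (re_le_Cmod (Cmult v V))|].
      rewrite Cmod_mult, Hv. lra. }
  assert (Hmain : forall r, 0 < r < 1 -> Cmod (a 0%nat) + (r * R0) ^ k * (Cmod (a k) / 2) <= 1).
  { intros r Hr.
    set (r' := (1 + r) / 2).
    assert (Hr' : r < r' < 1) by (unfold r'; lra).
    destruct (H r' 0 ltac:(lra)) as [V [HV _]].
    destruct (cseries_bounded _ _ HV) as [M HM].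
    assert (HM' : forall n, Cmod (a n) * (r' * R0) ^ n <= M).
    { intros n. eapply Rle_trans; [|apply (HM n)]. right.
      rewrite Cmod_mult. f_equal. rewrite Rmult_0_r, cos_0, sin_0, Rmult_0_r, Rmult_1_r.
      rewrite Cmod_pair. simpl fst; simpl snd.
      rewrite <- (sqrt_pow2 ((r' * R0) ^ n)) at 1 by (apply pow_le; nra). f_equal. ring. }
    assert (Hclaim : forall N, (2 * k < N)%nat ->
      x 0%nat + (r * R0) ^ k * (Cmod (a k) / 2) - 1 <= 2 * M / (1 - sqrt (r / r')) * sqrt (r / r') ^ (N - k)).
    { intros N HN.
      destruct (Req_dec (Cmod (a k)) 0) as [H0|H0].
      - assert (Hxk : x k = 0 /\ y k = 0).
        { rewrite <- Hxy in H0. apply sqrt_eq_0 in H0; [|nra]. nra. }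
        apply (claim a R0 k HR0 Hk x y Hxy HB N r r' M 1 0 1); try lra; auto.
        destruct Hxk as [-> ->]. rewrite H0. rewrite Tk0. lra. 
      - apply (claim a R0 k HR0 Hk x y Hxy HB N r r' M (x k) (y k) (Cmod (a k))); try lra; auto.
        + pose proof (Cmod_ge_0 (a k)). lra.
        + rewrite <- Hxy, pow2_sqrt; auto. nra.
        + apply Tk; auto. pose proof (Cmod_ge_0 (a k)). lra. rewrite <- Hxy, pow2_sqrt; auto. nra. }
    rewrite Hx0 in Hclaim.
    set (s := sqrt (r / r')) in *.
    assert (Hs : 0 < s < 1).
    { unfold s. split. apply sqrt_lt_R0. apply Rdiv_lt_0_compat; lra.
      rewrite <- sqrt_1. apply sqrt_lt_1_alt. split. left; apply Rdiv_lt_0_compat; lra.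
      apply Rlt_div_l; lra. }
    set (D := Cmod (a 0%nat) + (r * R0) ^ k * (Cmod (a k) / 2) - 1) in *.
    destruct (Rle_lt_dec D 0) as [HD|HD]; [unfold D in HD; lra|].
    exfalso.
    assert (HM0 : 0 <= M).
    { eapply Rle_trans; [|apply (HM' 0%nat)]. simpl. rewrite Rmult_1_r. apply Cmod_ge_0. }
    set (Cc := 2 * M / (1 - s)).
    assert (HCc : 0 <= Cc) by (unfold Cc; apply Rdiv_le_0_compat; lra).
    destruct (pow_lt_1_zero s ltac:(rewrite Rabs_pos_eq; lra) (D / (Cc + 1)) ltac:(apply Rdiv_lt_0_compat; lra)) as [N0 HN0].
    specialize (HN0 (N0 + 1)%nat ltac:(lia)).
    specialize (Hclaim (N0 + 2 * k + 1 + k)%nat ltac:(lia)).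
    replace (N0 + 2 * k + 1 + k - k)%nat with (N0 + 1 + 2 * k)%nat in Hclaim by lia.
    rewrite pow_add in Hclaim.
    rewrite Rabs_pos_eq in HN0 by (apply pow_le; lra).
    assert (Hsk : s ^ (2 * k) <= 1) by (apply pow_le_dec with (m := 0%nat) (s := s) (n := (2*k)%nat); lra || lia).
    assert (Hsp : 0 <= s ^ (N0 + 1)) by (apply pow_le; lra).
    assert (Hsk0 : 0 <= s ^ (2 * k)) by (apply pow_le; lra).
    assert (Cc * (s ^ (N0 + 1) * s ^ (2 * k)) <= Cc * (D / (Cc + 1))).
    { apply Rmult_le_compat_l; auto. nra. }
    assert (Cc * (D / (Cc + 1)) < D).
    { apply Rlt_le_trans with ((Cc + 1) * (D / (Cc + 1))). nra. right; field; lra. }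
    fold Cc in Hclaim. lra. }
  set (Z := R0 ^ k * (Cmod (a k) / 2)).
  assert (HZ : 0 <= Z) by (unfold Z; apply Rmult_le_pos; [apply pow_le; lra|pose proof (Cmod_ge_0 (a k)); lra]).
  set (D := Cmod (a 0%nat) + Z - 1).
  destruct (Rle_lt_dec D 0) as [HD|HD]; [unfold D, Z in HD; lra|].
  exfalso.
  set (kk := INR k).
  assert (Hkk : 0 <= kk) by apply pos_INR.
  set (d := Rmin (1/2) (D / (2 * (kk * Z + 1)))).
  assert (Hd : 0 < d <= 1/2).
  { unfold d. split. apply Rmin_pos; [lra|apply Rdiv_lt_0_compat; nra]. apply Rmin_l. }
  assert (Hd2 : d <= D / (2 * (kk * Z + 1))) by apply Rmin_r.
  specialize (Hmain (1 - d) ltac:(lra)).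
  rewrite Rpow_mult_distr in Hmain.
  assert (Hb := bernoulli_low (1 - d) k ltac:(lra)). fold kk in Hb.
  replace (1 - (1 - d)) with d in Hb by ring.
  assert (Hm : (1 - kk * d) * Z <= (1 - d) ^ k * Z) by (apply Rmult_le_compat_r; auto).
  assert (kk * d * Z <= D / 2).
  { apply Rle_trans with (kk * Z * (D / (2 * (kk * Z + 1)))).
    - assert (0 <= kk * Z) by nra. nra.
    - apply Rle_trans with ((kk * Z + 1) * (D / (2 * (kk * Z + 1)))).
      + assert (0 <= D / (2 * (kk * Z + 1))) by (apply Rdiv_le_0_compat; nra). nra.
      + right. field. nra. }
  unfold Z in Hm. unfold D, Z in *. nra.
Qed.

Definition uf (x : R) := 3 * (1 - x) * ln (1 - x) / x + 2.

Lemma ln_lt_neg x : 0 < x < 1 -> ln (1 - x) < - x.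
Proof.
  intros Hx. rewrite <- (ln_exp (- x)). apply ln_increasing; [lra|].
  assert (H := exp_ineq1 (- x) ltac:(lra)). lra.
Qed.

Lemma uf_incr x y : 0 < x -> x < y -> y < 1 -> uf x < uf y.
Proof.
  intros H1 H2 H3.
  apply (incr_function uf 0 1 (fun x => 3 * (- ln (1 - x) - x) / x ^ 2)); simpl; auto; try lra.
  - intros z Hz0 Hz1. unfold uf. auto_derive.
    + repeat split; lra.
    + unfold Rminus. field. lra.
  - intros z Hz0 Hz1. apply Rlt_gt. apply Rdiv_lt_0_compat; [|nra].
    assert (H := ln_lt_neg z (conj Hz0 Hz1)). lra.
Qed.

Lemma log_bound_eq rho : 0 < rho < 1 -> log_bound rho = - ln (1 - rho) / rho.
Proof. intros H. unfold log_bound. rewrite ln_Rinv by lra. field. lra. Qed.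

Lemma ineq_le rho0 rho : 0 < rho0 < 1 -> 3 * (1 - rho0) * ln (1 - rho0) + 2 * rho0 = 0 ->
  0 < rho <= rho0 -> 2 / (1 - rho) <= 3 * log_bound rho.
Proof.
  intros H0 Heq Hr. rewrite log_bound_eq by lra.
  assert (Hu0 : uf rho0 = 0) by (unfold uf; apply (Rmult_eq_reg_r rho0); [field_simplify; lra|]; lra).
  assert (Hu : uf rho <= 0).
  { destruct (Req_dec rho rho0) as [->|Hne]; [lra|].
    assert (uf rho < uf rho0) by (apply uf_incr; lra). lra. }
  unfold uf in Hu.
  assert (Hl : 3 * (1 - rho) * ln (1 - rho) + 2 * rho <= 0).
  { assert (3 * (1 - rho) * ln (1 - rho) / rho <= - 2) by lra.
    apply (Rmult_le_compat_r rho) in H; [|lra].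
    replace (3 * (1 - rho) * ln (1 - rho) / rho * rho) with (3 * (1 - rho) * ln (1 - rho)) in H by (field; lra).
    lra. }
  apply Rle_trans with (- 3 * (1 - rho) * ln (1 - rho) / (rho * (1 - rho))).
  - unfold Rdiv. apply Rmult_le_reg_r with (rho * (1 - rho)); [nra|].
    replace (2 * / (1 - rho) * (rho * (1 - rho))) with (2 * rho) by (field; lra).
    replace (- 3 * (1 - rho) * ln (1 - rho) * / (rho * (1 - rho)) * (rho * (1 - rho)))
      with (- 3 * (1 - rho) * ln (1 - rho)) by (field; lra). lra.
  - right. field. lra.
Qed.

Lemma ineq_gt rho0 rho : 0 < rho0 < 1 -> 3 * (1 - rho0) * ln (1 - rho0) + 2 * rho0 = 0 ->
  rho0 < rho < 1 -> 3 * log_bound rho < 2 / (1 - rho).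
Proof.
  intros H0 Heq Hr. rewrite log_bound_eq by lra.
  assert (Hu0 : uf rho0 = 0) by (unfold uf; apply (Rmult_eq_reg_r rho0); [field_simplify; lra|]; lra).
  assert (Hu : uf rho0 < uf rho) by (apply uf_incr; lra).
  rewrite Hu0 in Hu. unfold uf in Hu.
  assert (Hl : 0 < 3 * (1 - rho) * ln (1 - rho) + 2 * rho).
  { assert (- 2 < 3 * (1 - rho) * ln (1 - rho) / rho) by lra.
    apply (Rmult_lt_compat_r rho) in H; [|lra].
    replace (3 * (1 - rho) * ln (1 - rho) / rho * rho) with (3 * (1 - rho) * ln (1 - rho)) in H by (field; lra).
    lra. }
  apply Rlt_le_trans with (2 * rho / (rho * (1 - rho))); [|right; field; lra].
  replace (3 * (- ln (1 - rho) / rho)) with (- 3 * (1 - rho) * ln (1 - rho) / (rho * (1 - rho))) by (field; lra).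
  unfold Rdiv. apply Rmult_lt_compat_r; [apply Rinv_0_lt_compat; nra|]. lra.
Qed.

Lemma coef_bound (gamma : R) (f : C -> C) (a : nat -> C) :
  0 <= gamma < 1 -> in_B gamma f -> has_expansion gamma f a ->
  forall k, (1 <= k)%nat -> Cmod (a 0%nat) + (/ (1 - gamma)) ^ k * Cmod (a k) / 2 <= 1.
Proof.
  intros Hg [_ Hf] Hexp k Hk.
  apply core; auto. apply Rinv_0_lt_compat; lra.
  intros r t Hr.
  set (R0 := / (1 - gamma)).
  set (c := gamma / (1 - gamma)).
  set (z := (r * R0 * cos t - c, r * R0 * sin t) : C).
  assert (Hz : Cplus z (RtoC c) = ((r * R0) * cos t, (r * R0) * sin t)).
  { unfold z, Cplus, RtoC; simpl. f_equal; ring. }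
  assert (HO : Omega gamma z).
  { unfold Omega. fold c. rewrite Hz. rewrite Cmod_pair. simpl fst; simpl snd.
    replace ((r * R0 * cos t) ^ 2 + (r * R0 * sin t) ^ 2) with ((r * R0) ^ 2)
      by (rewrite <- (Rmult_1_r ((r * R0) ^ 2)), <- (cs1 t); ring).
    rewrite sqrt_pow2 by (unfold R0; assert (0 < /(1-gamma)) by (apply Rinv_0_lt_compat; lra); nra).
    unfold R0. assert (0 < /(1-gamma)) by (apply Rinv_0_lt_compat; lra).
    apply Rlt_le_trans with (1 * /(1-gamma)); [nra | right; field; lra]. }
  exists (f z). split; [|apply Hf; auto].
  eapply is_series_ext; [|apply Hexp; exact HO].
  intros n. fold c. rewrite Hz. rewrite demoivre. reflexivity.
Qed.

Lemma part1 (gamma rho0 : R) (f : C -> C) (a : nat -> C) :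
  0 <= gamma < 1 -> 0 < rho0 < 1 ->
  3 * (1 - rho0) * ln (1 - rho0) + 2 * rho0 = 0 ->
  in_B gamma f -> has_expansion gamma f a ->
  forall rho, 0 < rho <= rho0 ->
    ex_series (Cf_term gamma a rho) /\ Cf gamma a rho <= log_bound rho.
Proof.
  intros Hg H0 Heq HB Hexp rho Hr.
  assert (Hcb := coef_bound gamma f a Hg HB Hexp).
  set (u := fun k => Cmod (a k) / (1 - gamma) ^ k).
  set (al := Cmod (a 0%nat)).
  assert (Hu0 : u 0%nat = al) by (unfold u, al; simpl; field).
  assert (Hupos : forall k, 0 <= u k).
  { intros k. unfold u. apply Rdiv_le_0_compat; [apply Cmod_ge_0|apply pow_lt; lra]. }
  assert (Huk : forall k, (1 <= k)%nat -> u k <= 2 * (1 - al)).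
  { intros k Hk. specialize (Hcb k Hk). unfold u. unfold Rdiv. rewrite <- pow_inv. fold al. rewrite Rmult_comm. fold al in Hcb. change (Cmod (a 0%nat)) with al in Hcb. lra. }
  assert (Hal : 0 <= al <= 1).
  { split. apply Cmod_ge_0. specialize (Hcb 1%nat (le_n 1)). 
    assert (0 <= (/ (1 - gamma)) ^ 1 * Cmod (a 1%nat)).
    { apply Rmult_le_pos; [apply pow_le; left; apply Rinv_0_lt_compat; lra|apply Cmod_ge_0]. }
    fold al in Hcb. lra. }
  assert (Hsum : forall n, 0 <= sum_f_R0 u n <= al + 2 * INR n * (1 - al)).
  { induction n.
    - simpl. rewrite Hu0. lra.
    - simpl sum_f_R0. rewrite S_INR. specialize (Huk (S n) ltac:(lia)). specialize (Hupos (S n)). lra. }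
  set (L := log_bound rho).
  assert (HL := log_series rho ltac:(lra)).
  assert (Hgeo : is_series (fun n => rho ^ n) (/ (1 - rho))) by (apply is_series_geom; rewrite Rabs_pos_eq; lra).
  set (b := fun n => al * (rho ^ n / INR (n + 1)) + 2 * (1 - al) * (rho ^ n - rho ^ n / INR (n + 1))).
  assert (Hb : is_series b (al * L + 2 * (1 - al) * (/ (1 - rho) - L))).
  { apply (is_series_plus (V:=R_NormedModule)).
    - apply (is_series_scal_l (V:=R_NormedModule) al _ L). exact HL.
    - apply (is_series_scal_l (V:=R_NormedModule) (2 * (1 - al)) _ (/ (1 - rho) - L)).
      apply (is_series_minus (V:=R_NormedModule)); auto. }
  assert (Hle : forall n, 0 <= Cf_term gamma a rho n <= b n).
  { intros n. unfold Cf_term, b. fold u.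
    assert (HN : 0 < INR (n + 1)) by (apply lt_0_INR; lia).
    assert (Hp : 0 < rho ^ n) by (apply pow_lt; lra).
    specialize (Hsum n).
    split.
    - apply Rmult_le_pos; [|lra]. apply Rmult_le_pos; [left; apply Rinv_0_lt_compat; lra|lra].
    - replace (al * (rho ^ n / INR (n + 1)) + 2 * (1 - al) * (rho ^ n - rho ^ n / INR (n + 1)))
        with (/ INR (n + 1) * (al + 2 * INR n * (1 - al)) * rho ^ n)
        by (rewrite plus_INR; simpl INR; field; pose proof (pos_INR n); lra).
      apply Rmult_le_compat_r; [lra|]. apply Rmult_le_compat_l; [left; apply Rinv_0_lt_compat; lra|lra]. }
  assert (Hex : ex_series (Cf_term gamma a rho)).
  { refine (ex_series_le (K:=R_AbsRing) (V:=R_CompleteNormedModule) _ b _ _); [|eexists; exact Hb].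
    intros n. unfold norm; simpl. rewrite Rabs_pos_eq; apply Hle. }
  split; auto.
  unfold Cf. eapply Rle_trans; [apply Series_le; [exact Hle|eexists; exact Hb]|].
  rewrite (is_series_unique _ _ Hb).
  assert (Hi := ineq_le rho0 rho H0 Heq Hr). fold L in Hi.
  assert (HLp : 0 <= L).
  { unfold L. rewrite log_bound_eq by lra. assert (ln (1 - rho) < - rho) by (apply ln_lt_neg; lra).
    apply Rdiv_le_0_compat; lra. }
  unfold Rdiv in Hi. nra.
Qed.

Lemma Cmod_tri_low (x y : C) : Cmod x - Cmod (Cminus y x) <= Cmod y.
Proof.
  assert (H := Cmod_triangle y (Cminus x y)).
  replace (Cplus y (Cminus x y)) with x in H by ring.
  replace (Cminus x y) with (Copp (Cminus y x)) in H by ring.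
  rewrite Cmod_opp in H. lra.
Qed.

Lemma is_derive_Cinv (x : C) : x <> 0%C ->
  is_derive (K := C_AbsRing) (V := C_NormedModule) Cinv x (Copp (Cinv (Cmult x x))).
Proof.
  intros Hx. split.
  - apply (is_linear_scal_l (K := C_AbsRing) (V := C_NormedModule)).
  - intros x0 Hx0. apply (is_filter_lim_locally_unique (K:=C_AbsRing) (V:=AbsRing_NormedModule C_AbsRing)) in Hx0. subst x0.
    intros eps.
    set (m := Cmod x).
    assert (Hm : 0 < m) by (apply Cmod_gt_0; auto).
    set (d := Rmin (m / 2) (eps * m ^ 3 / 2)).
    assert (Hs2 : 0 < sqrt 2) by (apply sqrt_lt_R0; lra).
    assert (Hd : 0 < d).
    { unfold d. apply Rmin_pos; [lra|].
      assert (0 < m ^ 3) by (apply pow_lt; auto). assert (0 < eps) by apply cond_pos. nra. }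
    exists (mkposreal d Hd). intros y Hy.
    assert (Hy' : Cmod (Cminus y x) < Rmin (m / 2) (eps * m ^ 3 / 2)) by exact Hy.
    assert (H1 : Cmod (Cminus y x) < m / 2) by (eapply Rlt_le_trans; [exact Hy'|apply Rmin_l]).
    assert (H2 : Cmod (Cminus y x) < eps * m ^ 3 / 2) by (eapply Rlt_le_trans; [exact Hy'|apply Rmin_r]).
    assert (Hym : m / 2 <= Cmod y) by (pose proof (Cmod_tri_low x y); fold m in H; lra).
    assert (Hy0 : y <> RtoC 0) by (intros Hy0; rewrite Hy0, Cmod_0 in Hym; lra).
    change (norm ?z) with (Cmod z).
    change (minus (minus (Cinv y) (Cinv x)) (scal (minus y x) (Copp (Cinv (Cmult x x)))))
      with (Cminus (Cminus (Cinv y) (Cinv x)) (Cmult (Cminus y x) (Copp (Cinv (Cmult x x))))).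
    change (minus y x) with (Cminus y x).
    replace (Cminus (Cminus (Cinv y) (Cinv x)) (Cmult (Cminus y x) (Copp (Cinv (Cmult x x)))))
      with (Cmult (Cmult (Cminus y x) (Cminus y x)) (Cinv (Cmult (Cmult x x) y))) by (field; auto).
    rewrite !Cmod_mult, Cmod_inv, !Cmod_mult.
    2: { intros H. assert (H' : Cmod (Cmult (Cmult x x) y) = 0) by (rewrite H; apply Cmod_0).
         rewrite !Cmod_mult in H'. fold m in H'.
         assert (0 < m * m * Cmod y) by (apply Rmult_lt_0_compat; [nra|lra]). lra. }
    fold m. set (t := Cmod (Cminus y x)).
    assert (Ht : 0 <= t) by apply Cmod_ge_0.
    assert (Hp : 0 < m * m * Cmod y) by (apply Rmult_lt_0_compat; [nra|lra]).
    apply Rmult_le_reg_r with (m * m * Cmod y); auto.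
    rewrite Rmult_assoc, Rinv_l by lra. rewrite Rmult_1_r.
    assert (H2' : t < eps * m ^ 3 / 2) by exact H2.
    assert (t * t <= t * (eps * m ^ 3 / 2)) by (apply Rmult_le_compat_l; lra).
    assert (0 < eps) by apply cond_pos.
    assert (Hm3 : m ^ 3 = m * m * m) by (simpl; ring).
    assert (m ^ 3 / 2 <= m * m * Cmod y) by (rewrite Hm3; assert (0 <= m * m) by nra; nra).
    assert (0 <= eps * t) by nra.
    assert (eps * t * (m ^ 3 / 2) <= eps * t * (m * m * Cmod y)) by (apply Rmult_le_compat_l; auto).
    nra.
Qed.

Lemma ex_derive_affine (al be cg : C) (x : C) :
  ex_derive (K := C_AbsRing) (V := AbsRing_NormedModule C_AbsRing)
    (fun z => Cplus al (Cmult be (Cplus z cg))) x.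
Proof.
  assert (H1 : ex_derive (K := C_AbsRing) (V := AbsRing_NormedModule C_AbsRing) (fun z : C => Cplus z cg) x).
  { apply (ex_derive_plus (K := C_AbsRing) (V := AbsRing_NormedModule C_AbsRing) (fun z => z) (fun _ => cg)).
    apply ex_derive_id. apply ex_derive_const. }
  assert (H2 : ex_derive (K := C_AbsRing) (V := AbsRing_NormedModule C_AbsRing) (fun z : C => Cmult be (Cplus z cg)) x).
  { destruct H1 as [d1 H1].
    eexists. apply (is_derive_mult (K := C_AbsRing) (fun _ => be) (fun z => Cplus z cg) x zero d1).
    apply (is_derive_const (K:=C_AbsRing) (V:=AbsRing_NormedModule C_AbsRing) be x). exact H1. intros; apply Cmult_comm. }
  apply (ex_derive_plus (K := C_AbsRing) (V := AbsRing_NormedModule C_AbsRing) (fun _ => al) (fun z => Cmult be (Cplus z cg))).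
  apply ex_derive_const. exact H2.
Qed.

Lemma ex_derive_mobius (k0 al be cg : C) (x : C) :
  Cplus al (Cmult be (Cplus x cg)) <> RtoC 0 ->
  ex_derive (K := C_AbsRing) (V := C_NormedModule)
    (fun z => Cminus k0 (Cinv (Cplus al (Cmult be (Cplus z cg))))) x.
Proof.
  intros Hnz.
  apply (ex_derive_minus (K := C_AbsRing) (V := C_NormedModule) (fun _ => k0)
          (fun z => Cinv (Cplus al (Cmult be (Cplus z cg))))).
  - apply ex_derive_const.
  - apply (ex_derive_comp (K := C_AbsRing) (V := C_NormedModule) Cinv (fun z => Cplus al (Cmult be (Cplus z cg)))).
    + eexists. apply is_derive_Cinv. exact Hnz.
    + apply ex_derive_affine.
Qed.

Lemma pow_n_S (q : C) n : pow_n (K := C_Ring) q (S n) = Cmult q (pow_n (K := C_Ring) q n).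
Proof. reflexivity. Qed.
Lemma pow_n_O (q : C) : pow_n (K := C_Ring) q 0 = RtoC 1.
Proof. reflexivity. Qed.

Lemma Cmod_pow_n (q : C) n : Cmod (pow_n (K := C_Ring) q n) = Cmod q ^ n.
Proof. induction n. rewrite pow_n_O. apply Cmod_1. rewrite pow_n_S, Cmod_mult, IHn. reflexivity. Qed.

Lemma pow_n_scal (r : R) (w : C) n :
  pow_n (K := C_Ring) (Cmult (RtoC r) w) n = Cmult (RtoC (r ^ n)) (pow_n (K := C_Ring) w n).
Proof.
  induction n.
  - rewrite !pow_n_O. simpl. unfold RtoC, Cmult; simpl. f_equal; ring.
  - rewrite !pow_n_S, IHn. simpl pow. rewrite (RtoC_mult r (r ^ n)). match goal with |- ?a = ?b => change (@eq C a b) end. ring.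
Qed.

Lemma geom_partial (q : C) n :
  Cmult (@sum_n C_NormedModule (fun k => pow_n (K := C_Ring) q k) n) (Cminus (RtoC 1) q) = Cminus (RtoC 1) (pow_n (K := C_Ring) q (S n)).
Proof.
  induction n.
  - rewrite sum_O. rewrite pow_n_S, pow_n_O. ring.
  - rewrite sum_Sn. change (plus ?a ?b) with (Cplus a b).
    rewrite Cmult_plus_distr_r, IHn. rewrite (pow_n_S q (S n)). ring.
Qed.

Lemma cgeom (q : C) : Cmod q < 1 ->
  is_series (V := C_NormedModule) (fun n => pow_n (K := C_Ring) q n) (Cinv (Cminus (RtoC 1) q)).
Proof.
  intros Hq.
  assert (H1q : Cminus (RtoC 1) q <> RtoC 0).
  { intros H. assert (q = RtoC 1) by (replace q with (Cminus (RtoC 1) (Cminus (RtoC 1) q)) by ring; rewrite H; ring).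
    subst q. rewrite Cmod_1 in Hq. lra. }
  assert (Hm : 0 < Cmod (Cminus (RtoC 1) q)) by (apply Cmod_gt_0; auto).
  intros P [eps HP].
  assert (Hq0 : 0 <= Cmod q) by apply Cmod_ge_0.
  destruct (pow_lt_1_zero (Cmod q) ltac:(rewrite Rabs_pos_eq; lra) (eps * Cmod (Cminus (RtoC 1) q)))
    as [N HN]; [apply Rmult_lt_0_compat; [apply cond_pos|auto]|].
  exists N. intros n Hn. apply HP.
  apply C_NormedModule_mixin_compat1.
  change (minus ?a ?b) with (Cminus a b).
  assert (E : Cminus (@sum_n C_NormedModule (fun k => pow_n (K := C_Ring) q k) n) (Cinv (Cminus (RtoC 1) q)) =
              Cmult (Copp (pow_n (K := C_Ring) q (S n))) (Cinv (Cminus (RtoC 1) q))).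
  { rewrite <- (Cmult_1_r (sum_n _ n)).
    rewrite <- (Cinv_r (Cminus (RtoC 1) q)) by auto.
    rewrite Cmult_assoc, geom_partial. field. auto. }
  rewrite E, Cmod_mult, Cmod_opp, Cmod_inv, Cmod_pow_n by auto.
  specialize (HN (S n) ltac:(lia)). rewrite Rabs_pos_eq in HN by (apply pow_le; lra).
  apply Rmult_lt_reg_r with (Cmod (Cminus (RtoC 1) q)); auto.
  rewrite Rmult_assoc, Rinv_l by lra. lra.
Qed.

Definition bC (c : R) (n : nat) : C :=
  match n with O => RtoC c | S m => RtoC (- (1 - c ^ 2) * c ^ m) end.

Lemma Cmod_cw (c : R) (w : C) : 0 <= c < 1 -> Cmod w < 1 -> Cmod (Cmult (RtoC c) w) < 1.
Proof.
  intros Hc Hw. rewrite Cmod_mult, Cmod_R, Rabs_pos_eq by lra.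
  pose proof (Cmod_ge_0 w). nra.
Qed.

Lemma one_minus_cw (c : R) (w : C) : 0 <= c < 1 -> Cmod w < 1 -> Cminus (RtoC 1) (Cmult (RtoC c) w) <> RtoC 0.
Proof.
  intros Hc Hw H.
  assert (E : Cmult (RtoC c) w = RtoC 1).
  { replace (Cmult (RtoC c) w) with (Cminus (RtoC 1) (Cminus (RtoC 1) (Cmult (RtoC c) w))) by ring.
    rewrite H. ring. }
  assert (Hl := Cmod_cw c w Hc Hw). rewrite E, Cmod_1 in Hl. lra.
Qed.

Lemma mob_series (c : R) (w : C) : 0 < c < 1 -> Cmod w < 1 ->
  is_series (V := C_NormedModule) (fun n => Cmult (bC c n) (pow_n (K := C_Ring) w n))
    (Cmult (Cminus (RtoC c) w) (Cinv (Cminus (RtoC 1) (Cmult (RtoC c) w)))).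
Proof.
  intros Hc Hw.
  assert (Hnz := one_minus_cw c w ltac:(lra) Hw).
  apply is_series_decr_1.
  assert (G := cgeom (Cmult (RtoC c) w) (Cmod_cw c w ltac:(lra) Hw)).
  apply (is_series_scal_l (V := C_NormedModule) (Cmult (RtoC (- (1 - c ^ 2))) w)) in G.
  match goal with |- is_series _ ?L =>
    assert (Lv : L = Cmult (Cmult (RtoC (- (1 - c ^ 2))) w) (Cinv (Cminus (RtoC 1) (Cmult (RtoC c) w)))) end.
  { change (plus ?x ?y) with (Cplus x y). change (opp ?x) with (Copp x).
    simpl bC. rewrite pow_n_O.
    rewrite RtoC_opp, RtoC_minus, RtoC_pow. match goal with |- ?a = ?b => change (@eq C a b) end. field. auto. }
  rewrite Lv.
  eapply is_series_ext; [|exact G].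
  intros n. change (scal ?x ?y) with (Cmult x y). cbv beta. unfold bC.
  rewrite pow_n_scal, pow_n_S. rewrite (RtoC_mult (- (1 - c ^ 2)) (c ^ n)).
  match goal with |- ?a = ?b => change (@eq C a b) end. ring.
Qed.

Lemma Cmod_pair2 (z : C) : Cmod z = sqrt (fst z ^ 2 + snd z ^ 2).
Proof. destruct z; reflexivity. Qed.

Lemma mob_bound (c : R) (w : C) : 0 < c < 1 -> Cmod w < 1 ->
  Cmod (Cmult (Cminus (RtoC c) w) (Cinv (Cminus (RtoC 1) (Cmult (RtoC c) w)))) <= 1.
Proof.
  intros Hc Hw.
  assert (Hnz := one_minus_cw c w ltac:(lra) Hw).
  assert (Hpos : 0 < Cmod (Cminus (RtoC 1) (Cmult (RtoC c) w))) by (apply Cmod_gt_0; auto).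
  rewrite Cmod_mult, Cmod_inv by auto.
  apply Rmult_le_reg_r with (Cmod (Cminus (RtoC 1) (Cmult (RtoC c) w))); auto.
  rewrite Rmult_assoc, Rinv_l, Rmult_1_r, Rmult_1_l by lra.
  destruct w as [p q]. rewrite !Cmod_pair2 in *. simpl fst in *; simpl snd in *.
  apply sqrt_le_1_alt.
  assert (Hw2 : p ^ 2 + q ^ 2 < 1).
  { rewrite <- sqrt_1 in Hw. apply sqrt_lt_0_alt in Hw. lra. }
  assert (0 <= (1 - c ^ 2) * (1 - p ^ 2 - q ^ 2)) by (apply Rmult_le_pos; nra). nra.
Qed.

Definition cgam (gamma : R) : C := RtoC (gamma / (1 - gamma)).

Definition wof (gamma : R) (z : C) : C := Cmult (RtoC (1 - gamma)) (Cplus z (cgam gamma)).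

Definition fex (gamma c : R) (z : C) : C :=
  Cminus (RtoC (/ c)) (Cinv (Cplus (RtoC (c / (1 - c ^ 2)))
     (Cmult (RtoC (- c ^ 2 * (1 - gamma) / (1 - c ^ 2))) (Cplus z (cgam gamma))))).

Definition aex (gamma c : R) (n : nat) : C := Cmult (bC c n) (RtoC ((1 - gamma) ^ n)).

Lemma affine_eq gamma c z : 0 < c < 1 -> 0 <= gamma < 1 ->
  Cplus (RtoC (c / (1 - c ^ 2))) (Cmult (RtoC (- c ^ 2 * (1 - gamma) / (1 - c ^ 2))) (Cplus z (cgam gamma)))
  = Cmult (RtoC (c / (1 - c ^ 2))) (Cminus (RtoC 1) (Cmult (RtoC c) (wof gamma z))).
Proof.
  intros Hc Hg.
  assert (Hc2 : 1 - c ^ 2 <> 0) by nra.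
  unfold wof. set (zz := Cplus z (cgam gamma)).
  rewrite !RtoC_div by auto. rewrite !RtoC_mult, !RtoC_minus, RtoC_opp, !RtoC_pow.
  field. intros H. apply Hc2. apply (f_equal fst) in H. simpl in H. nra.
Qed.

Lemma affine_nz gamma c z : 0 < c < 1 -> 0 <= gamma < 1 ->
  Cminus (RtoC 1) (Cmult (RtoC c) (wof gamma z)) <> RtoC 0 ->
  Cplus (RtoC (c / (1 - c ^ 2))) (Cmult (RtoC (- c ^ 2 * (1 - gamma) / (1 - c ^ 2))) (Cplus z (cgam gamma))) <> RtoC 0.
Proof.
  intros Hc Hg Hnz. rewrite affine_eq by auto. intros H.
  assert (Hm : Cmod (Cmult (RtoC (c / (1 - c ^ 2))) (Cminus (RtoC 1) (Cmult (RtoC c) (wof gamma z)))) = 0)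
    by (rewrite H; apply Cmod_0).
  rewrite Cmod_mult, Cmod_R in Hm.
  assert (0 < c / (1 - c ^ 2)) by (apply Rdiv_lt_0_compat; nra).
  assert (0 < Cmod (Cminus (RtoC 1) (Cmult (RtoC c) (wof gamma z)))) by (apply Cmod_gt_0; auto).
  rewrite Rabs_pos_eq in Hm by lra. nra.
Qed.

Lemma fex_eq gamma c z : 0 < c < 1 -> 0 <= gamma < 1 ->
  Cminus (RtoC 1) (Cmult (RtoC c) (wof gamma z)) <> RtoC 0 ->
  fex gamma c z = Cmult (Cminus (RtoC c) (wof gamma z)) (Cinv (Cminus (RtoC 1) (Cmult (RtoC c) (wof gamma z)))).
Proof.
  intros Hc Hg Hnz. unfold fex.
  assert (Hc2 : 1 - c ^ 2 <> 0) by nra.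
  rewrite affine_eq by auto.
  assert (HcC : RtoC c <> RtoC 0) by (intros H; apply (f_equal fst) in H; cbn [fst RtoC] in H; lra).
  assert (Hc2C : RtoC (c / (1 - c ^ 2)) <> RtoC 0).
  { intros H; apply (f_equal fst) in H; cbn [fst RtoC] in H. assert (0 < c / (1 - c^2)) by (apply Rdiv_lt_0_compat; nra). lra. }
  rewrite RtoC_inv by lra.
  rewrite !RtoC_div in * by auto. rewrite RtoC_minus, RtoC_pow in *.
  field. repeat split; auto. all: intros H; apply Hc2; apply (f_equal fst) in H; simpl in H; nra.
Qed.

Lemma Omega_w gamma z : 0 <= gamma < 1 -> Omega gamma z -> Cmod (wof gamma z) < 1.
Proof.
  intros Hg HO. unfold Omega in HO. unfold wof, cgam.
  rewrite Cmod_mult, Cmod_R, Rabs_pos_eq by lra.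
  apply Rmult_lt_compat_l with (r := 1 - gamma) in HO; [|lra].
  replace ((1 - gamma) * (1 / (1 - gamma))) with 1 in HO by (field; lra). exact HO.
Qed.

Lemma fex_inB gamma c : 0 < c < 1 -> 0 <= gamma < 1 -> in_B gamma (fex gamma c).
Proof.
  intros Hc Hg. split.
  - intros z HO.
    assert (Hw := Omega_w gamma z Hg HO).
    apply ex_derive_mobius. apply affine_nz; auto. apply one_minus_cw; auto; lra.
  - intros z HO.
    assert (Hw := Omega_w gamma z Hg HO).
    rewrite fex_eq; auto. apply mob_bound; auto. apply one_minus_cw; auto; lra.
Qed.

Lemma fex_exp gamma c : 0 < c < 1 -> 0 <= gamma < 1 -> has_expansion gamma (fex gamma c) (aex gamma c).
Proof.
  intros Hc Hg z HO.
  assert (Hw := Omega_w gamma z Hg HO).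
  rewrite fex_eq by (auto; apply one_minus_cw; auto; lra).
  eapply is_series_ext; [|apply (mob_series c (wof gamma z) Hc Hw)].
  intros n. unfold wof, aex, cgam. rewrite pow_n_scal.
  match goal with |- ?a = ?b => change (@eq C a b) end. ring.
Qed.

Lemma ex_series_n1 rho : 0 <= rho < 1 -> ex_series (fun n => INR (n + 1) * rho ^ n).
Proof.
  intros Hr.
  assert (Hc : CV_radius (fun _ : nat => 1) = 1).
  { rewrite (CV_radius_finite_DAlembert _ 1).
    - simpl. f_equal. lra.
    - intros; lra.
    - lra.
    - eapply is_lim_seq_ext; [|apply is_lim_seq_const].
      intros n; simpl. rewrite Rdiv_1_l, Rinv_1, Rabs_R1. reflexivity. }
  assert (Hd : CV_radius (PS_derive (fun _ : nat => 1)) = 1) by (rewrite CV_radius_derive; auto).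
  assert (He : ex_pseries (PS_derive (fun _ : nat => 1)) rho).
  { apply CV_radius_inside. rewrite Hd. simpl. rewrite Rabs_pos_eq; lra. }
  destruct He as [l Hl]. exists l.
  assert (Heq : forall n, scal (pow_n rho n) (PS_derive (fun _ : nat => 1) n) = INR (n + 1) * rho ^ n).
  { intros n. unfold PS_derive. rewrite pow_n_pow. change (scal ?a ?b) with (a * b).
    match goal with |- ?a = ?b => change (@eq R a b) end. rewrite Nat.add_1_r. ring. }
  eapply is_series_ext; [|exact Hl]. exact Heq.
Qed.

Lemma bonf d n : 0 <= d <= 1 -> (1 - d) ^ n <= 1 - INR n * d + INR n * (INR n - 1) / 2 * d ^ 2.
Proof.
  intros Hd. induction n.
  - simpl. lra.
  - rewrite S_INR. simpl pow.
    assert (0 <= (1 - d)) by lra.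
    assert (H1 : (1 - d) * (1 - d) ^ n <= (1 - d) * (1 - INR n * d + INR n * (INR n - 1) / 2 * d ^ 2))
      by (apply Rmult_le_compat_l; auto).
    assert (Hn : 0 <= INR n * (INR n - 1)).
    { destruct n. simpl; lra. rewrite S_INR. assert (0 <= INR n) by apply pos_INR. nra. }
    assert (0 <= INR n * (INR n - 1) / 2 * d ^ 3) by (apply Rmult_le_pos; [lra|apply pow_le; lra]).
    simpl in *. nra.
Qed.

Lemma key_ineq d n : 0 < d <= 1/2 ->
  (2 * INR n - 1) * d - INR n ^ 2 * d ^ 2 <= 2 * (1 - d) - (2 - d) * (1 - d) ^ n.
Proof.
  intros Hd. assert (B := bonf d n ltac:(lra)).
  set (N := INR n) in *. assert (HN : 0 <= N) by apply pos_INR.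
  assert (H1 : (2 - d) * (1 - d) ^ n <= (2 - d) * (1 - N * d + N * (N - 1) / 2 * d ^ 2))
    by (apply Rmult_le_compat_l; lra).
  assert (H2 : 0 <= N * (N - 1) / 2 * d ^ 3 + 0).
  { destruct n. unfold N; simpl; lra.
    unfold N. rewrite S_INR. assert (0 <= INR n) by apply pos_INR.
    assert (0 <= (INR n + 1) * (INR n + 1 - 1)) by nra.
    assert (0 <= d ^ 3) by (apply pow_le; lra). nra. }
  simpl in *. nra.
Qed.

Lemma u_aex gamma c k : 0 < c < 1 -> 0 <= gamma < 1 ->
  Cmod (aex gamma c k) / (1 - gamma) ^ k = match k with O => c | S m => (1 - c ^ 2) * c ^ m end.
Proof.
  intros Hc Hg. unfold aex. rewrite Cmod_mult, !Cmod_R.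
  assert (0 < (1 - gamma) ^ k) by (apply pow_lt; lra).
  rewrite (Rabs_pos_eq ((1 - gamma) ^ k)) by lra.
  destruct k; cbn [bC]; rewrite Cmod_R.
  - rewrite Rabs_pos_eq by lra. simpl. field.
  - rewrite Rabs_left1. field. lra.
    assert (0 <= c ^ k) by (apply pow_le; lra). assert (0 < 1 - c ^ 2) by nra.
    nra.
Qed.

Lemma sum_aex gamma c n : 0 < c < 1 -> 0 <= gamma < 1 ->
  sum_f_R0 (fun k => Cmod (aex gamma c k) / (1 - gamma) ^ k) n = c + (1 + c) * (1 - c ^ n).
Proof.
  intros Hc Hg. induction n.
  - simpl. rewrite u_aex by auto. ring.
  - simpl sum_f_R0. rewrite IHn, u_aex by auto. simpl. ring.
Qed.

Lemma part2 (gamma rho0 rho : R) :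
  0 <= gamma < 1 -> 0 < rho0 < 1 ->
  3 * (1 - rho0) * ln (1 - rho0) + 2 * rho0 = 0 ->
  rho0 < rho < 1 ->
  exists (f : C -> C) (a : nat -> C),
    in_B gamma f /\ has_expansion gamma f a /\
    ex_series (Cf_term gamma a rho) /\ Cf gamma a rho > log_bound rho.
Proof.
  intros Hg H0 Heq Hr.
  set (L := log_bound rho).
  assert (HL := log_series rho ltac:(lra)). fold L in HL.
  assert (Hgeo : is_series (fun n => rho ^ n) (/ (1 - rho))) by (apply is_series_geom; rewrite Rabs_pos_eq; lra).
  destruct (ex_series_n1 rho ltac:(lra)) as [S2 HS2].
  set (S1 := 2 * / (1 - rho) - 3 * L).
  assert (HS1 : 0 < S1).
  { assert (Hi := ineq_gt rho0 rho H0 Heq Hr). fold L in Hi. unfold S1. unfold Rdiv in Hi. lra. }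
  set (d := Rmin (1/2) (S1 / (2 * (Rabs S2 + 1)))).
  assert (Hd : 0 < d <= 1/2).
  { unfold d. split. apply Rmin_pos; [lra|]. apply Rdiv_lt_0_compat; [lra|]. pose proof (Rabs_pos S2); lra.
    apply Rmin_l. }
  assert (Hd2 : d <= S1 / (2 * (Rabs S2 + 1))) by apply Rmin_r.
  set (c := 1 - d).
  assert (Hc : 0 < c < 1) by (unfold c; lra).
  exists (fex gamma c), (aex gamma c).
  split; [apply fex_inB; auto|]. split; [apply fex_exp; auto|].
  assert (HLc := log_series (c * rho) ltac:(split; nra)).
  assert (HCf : is_series (Cf_term gamma (aex gamma c) rho)
              ((1 + 2 * c) * L - (1 + c) * log_bound (c * rho))).
  { assert (G := is_series_minus _ _ _ _ (is_series_scal_l (1 + 2 * c) _ _ HL) (is_series_scal_l (1 + c) _ _ HLc)).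
    eapply is_series_ext; [|exact G].
    intros n. unfold Cf_term. rewrite sum_aex by auto.
    change (plus ?a (opp ?b)) with (a - b). change (scal ?a ?b) with (a * b).
    match goal with |- ?a = ?b => change (@eq R a b) end. rewrite Rpow_mult_distr. field. apply not_0_INR. lia. }
  split; [eexists; exact HCf|].
  unfold Cf. rewrite (is_series_unique _ _ HCf).
  set (D := fun n => Cf_term gamma (aex gamma c) rho n - rho ^ n / INR (n + 1)).
  set (low := fun n => d * (2 * rho ^ n - 3 * (rho ^ n / INR (n + 1))) - d ^ 2 * (INR (n + 1) * rho ^ n)).
  assert (HD : is_series D (((1 + 2 * c) * L - (1 + c) * log_bound (c * rho)) - L)).
  { apply (is_series_minus _ _ _ _ HCf HL). }
  assert (Hlow : is_series low (d * (2 * / (1 - rho) - 3 * L) - d ^ 2 * S2)).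
  { apply (is_series_minus (V := R_NormedModule)).
    - apply (is_series_scal_l (V := R_NormedModule) d _ (2 * / (1 - rho) - 3 * L)).
      apply (is_series_minus (V := R_NormedModule)).
      + apply (is_series_scal_l (V := R_NormedModule) 2 _ (/ (1 - rho))). exact Hgeo.
      + apply (is_series_scal_l (V := R_NormedModule) 3 _ L). exact HL.
    - apply (is_series_scal_l (V := R_NormedModule) (d ^ 2) _ S2). exact HS2. }
  assert (Hcmp : forall n, low n <= D n).
  { intros n. unfold low, D, Cf_term. rewrite sum_aex by auto.
    assert (K := key_ineq d n Hd).
    assert (HN1 : 0 < INR (n + 1)) by (apply lt_0_INR; lia).
    assert (Hp : 0 <= rho ^ n) by (apply pow_le; lra).
    rewrite plus_INR in *. simpl INR in *.
    set (N := INR n) in *. assert (HN : 0 <= N) by apply pos_INR.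
    replace (c + (1 + c) * (1 - c ^ n)) with (1 + (2 * c - (1 + c) * c ^ n)) by ring.
    replace (/ (N + 1) * (1 + (2 * c - (1 + c) * c ^ n)) * rho ^ n - rho ^ n / (N + 1))
      with (rho ^ n / (N + 1) * (2 * c - (1 + c) * c ^ n)) by (field; lra).
    unfold c in *. replace (1 + (1 - d)) with (2 - d) by ring.
    assert (E1 : rho ^ n / (N + 1) * ((2 * N - 1) * d - N ^ 2 * d ^ 2) <= rho ^ n / (N + 1) * (2 * (1 - d) - (2 - d) * (1 - d) ^ n)).
    { apply Rmult_le_compat_l; [apply Rdiv_le_0_compat; lra|lra]. }
    assert (E2 : N ^ 2 / (N + 1) <= N + 1).
    { apply Rmult_le_reg_r with (N + 1); [lra|]. unfold Rdiv. rewrite Rmult_assoc, Rinv_l by lra. nra. }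
    assert (E3 : rho ^ n * d ^ 2 * (N ^ 2 / (N + 1)) <= rho ^ n * d ^ 2 * (N + 1)).
    { apply Rmult_le_compat_l; auto. apply Rmult_le_pos; auto. apply pow_le; lra. }
    assert (E4 : rho ^ n / (N + 1) * ((2 * N - 1) * d - N ^ 2 * d ^ 2) =
                 d * (2 * rho ^ n - 3 * (rho ^ n / (N + 1))) - rho ^ n * d ^ 2 * (N ^ 2 / (N + 1))) by (field; lra).
    lra. }
  assert (Hdiff := is_series_minus _ _ _ _ HD Hlow).
  assert (Hnn : 0 <= Series (fun n => D n - low n)).
  { assert (Z := Series_le (fun _ => 0) (fun n => D n - low n)).
    rewrite (is_series_unique _ _ zero_series) in Z. apply Z.
    - intros n. specialize (Hcmp n). lra.
    - eexists. exact Hdiff. }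
  assert (Hv : Series (fun n => D n - low n) = ((((1 + 2 * c) * L - (1 + c) * log_bound (c * rho)) - L)) - (d * (2 * / (1 - rho) - 3 * L) - d ^ 2 * S2)).
  { apply is_series_unique. exact Hdiff. }
  rewrite Hv in Hnn. fold S1 in Hnn.
  assert (HS2b : d ^ 2 * S2 <= d * (S1 / 2)).
  { assert (S2 <= Rabs S2) by apply Rle_abs.
    assert (Hd3 : d * (Rabs S2 + 1) <= S1 / 2).
    { apply Rle_trans with (S1 / (2 * (Rabs S2 + 1)) * (Rabs S2 + 1)).
      apply Rmult_le_compat_r; [pose proof (Rabs_pos S2); lra|auto].
      right. field. pose proof (Rabs_pos S2); lra. }
    pose proof (Rabs_pos S2). simpl. nra. }
  apply Rlt_gt. unfold L in *. nra.
Qed.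

Theorem theorem1 (gamma rho0 : R) :
  0 <= gamma < 1 ->
  0 < rho0 < 1 ->
  3 * (1 - rho0) * ln (1 - rho0) + 2 * rho0 = 0 ->
  (forall (f : C -> C) (a : nat -> C),
      in_B gamma f -> has_expansion gamma f a ->
      forall rho, 0 < rho <= rho0 ->
        ex_series (Cf_term gamma a rho) /\ Cf gamma a rho <= log_bound rho) /\
  (forall rho, rho0 < rho < 1 ->
      exists (f : C -> C) (a : nat -> C),
        in_B gamma f /\ has_expansion gamma f a /\
        ex_series (Cf_term gamma a rho) /\ Cf gamma a rho > log_bound rho).
Proof.
  intros Hg H0 Heq. split.
  - intros f a HB Hexp rho Hr. exact (part1 gamma rho0 f a Hg H0 Heq HB Hexp rho Hr).
  - intros rho Hr. exact (part2 gamma rho0 rho Hg H0 Heq Hr).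
Qed.
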